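(* Let $F$ be the cdf of a continuous nonnegative random variable with unbounded support $[0,\infty)$, density $f$ and reversed hazard rate $\tilde h=f/F$. Let $\sigma_1,\sigma_2\geq0$, $\lambda_1,\lambda_2>0$, $r_1,r_2\geq0$, and let $n_1,n_2,n_1^*,n_2^*$ be positive integers with $n_1r_1+n_2r_2=1$ and $n_1^*r_1+n_2^*r_2=1$; put $n=n_1+n_2$, $n^*=n_1^*+n_2^*$. Let $U_n$ and $U_{n^*}$ be random variables with cdfs $$F_{U_n}(x)=n_1r_1F\!\left(\tfrac{x-\sigma_1}{\lambda_1}\right)I(x>\sigma_1)+n_2r_2F\!\left(\tfrac{x-\sigma_2}{\lambda_2}\right)I(x>\sigma_2),$$ $$F_{U_{n^*}}(x)=n_1^*r_1F\!\left(\tfrac{x-\sigma_1}{\lambda_1}\right)I(x>\sigma_1)+n_2^*r_2F\!\left(\tfrac{x-\sigma_2}{\lambda_2}\right)I(x>\sigma_2).$$ Suppose either that $F$ is DPRFR and $(\lambda_1,\lambda_2),(\sigma_1,\sigma_2)\in\mathcal{D}_2^+$, or that $F$ is IRFR and $(\lambda_1,\lambda_2),(\sigma_1,\sigma_2)\in\mathcal{E}_2^+$. If $n_1n_2^*\geq n_1^*n_2$, then $U_n\geq_{rh}U_{n^*}$.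
   Context: $I(x>\sigma)$ is $1$ if $x>\sigma$ and $0$ otherwise. $\mathcal{D}_2^+=\{(u_1,u_2):u_1\geq u_2>0\}$, $\mathcal{E}_2^+=\{(u_1,u_2):0<u_1\leq u_2\}$. $F$ is DPRFR (decreasing proportional reversed failure rate) if $x\tilde h(x)$ is decreasing in $x>0$; $F$ is IRFR if $\tilde h(x)$ is increasing in $x>0$. $X\geq_{rh}Y$ means the reversed hazard rate of $X$ is at least that of $Y$ at every $x\geq0$ (equivalently $F_X(x)/F_Y(x)$ is increasing). *)

(* Defs.v *)
From Stdlib Require Import Reals.
From Coquelicot Require Import Coquelicot.
Open Scope R_scope.

Definition ind_gt (x s : R) : R := if Rlt_dec s x then 1 else 0.

(* F is the cdf of a continuous nonnegative random variable with support
   [0, +oo): continuous, nondecreasing, zero on (-oo,0], strictly increasing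
   on [0,+oo) (so every point of [0,oo) is in the support), tends to 1 at +oo. *)
Definition cont_nonneg_cdf_full_support (F : R -> R) : Prop :=
  (forall x, continuous F x) /\
  (forall x y, x <= y -> F x <= F y) /\
  (forall x, x <= 0 -> F x = 0) /\
  (forall x y, 0 <= x -> x < y -> F x < F y) /\
  is_lim F p_infty 1.

Definition is_density (F f : R -> R) : Prop :=
  (forall x, 0 <= f x) /\ (forall x, 0 < x -> is_derive F x (f x)).

Definition rev_hazard (F f : R -> R) (x : R) : R := f x / F x.

Definition DPRFR (F f : R -> R) : Prop :=
  forall x y, 0 < x -> x <= y -> y * rev_hazard F f y <= x * rev_hazard F f x.

Definition IRFR (F f : R -> R) : Prop :=
  forall x y, 0 < x -> x <= y -> rev_hazard F f x <= rev_hazard F f y.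

Definition D2plus (u1 u2 : R) : Prop := u1 >= u2 /\ u2 > 0.
Definition E2plus (u1 u2 : R) : Prop := 0 < u1 /\ u1 <= u2.

Definition mix_cdf (F : R -> R) (a1 a2 s1 s2 l1 l2 : R) (x : R) : R :=
  a1 * F ((x - s1) / l1) * ind_gt x s1 + a2 * F ((x - s2) / l2) * ind_gt x s2.

(* X >=_rh Y, in terms of cdfs: F_X(x)/F_Y(x) is increasing (nondecreasing)
   in x >= 0 (on the set where F_Y > 0, where the ratio is defined). *)
Definition rh_ge (FX FY : R -> R) : Prop :=
  forall x y, 0 <= x -> x <= y -> 0 < FY x -> FX x / FY x <= FX y / FY y.

(* Main.v *)
Require Import Defs.
From Stdlib Require Import Reals Lra.
From Coquelicot Require Import Coquelicot.
Open Scope R_scope.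

Lemma F_nonneg F : cont_nonneg_cdf_full_support F -> forall z, 0 <= F z.
Proof.
  intros (_ & Hm & H0 & _ & _) z.
  destruct (Rle_dec z 0) as [h|h]. rewrite H0; lra.
  rewrite <- (H0 0) by lra. apply Hm; lra.
Qed.

Lemma F_pos F : cont_nonneg_cdf_full_support F -> forall z, 0 < z -> 0 < F z.
Proof.
  intros HF z hz. destruct HF as (_ & _ & H0 & Hs & _).
  rewrite <- (H0 0) by lra. apply Hs; lra.
Qed.

Lemma F_cpt F : cont_nonneg_cdf_full_support F -> forall z, continuity_pt F z.
Proof.
  intros (Hc & _) z. apply continuity_pt_filterlim. apply Hc.
Qed.

Lemma irfr_false F f : cont_nonneg_cdf_full_support F -> is_density F f -> IRFR F f -> False.
Proof.
  intros HF [Hf0 Hd] HI.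
  assert (HF1 : 0 < F 1) by (apply F_pos; auto; lra).
  destruct (Rle_lt_or_eq_dec 0 (f 1) (Hf0 1)) as [hp|hz].
  -
    assert (Hge : forall x, 1 <= x -> f 1 <= f x).
    { intros x hx. pose proof (HI 1 x ltac:(lra) hx) as H. unfold rev_hazard in H.
      assert (HFx : F 1 <= F x) by (apply HF; lra).
      set (q := f x / F x) in H.
      assert (Fxp : 0 < F x) by lra.
      assert (f x = q * F x) by (unfold q; field; lra).
      assert (f 1 = (f 1 / F 1) * F 1) by (field; lra).
      set (p := f 1 / F 1) in *.
      assert (0 <= p) by (unfold p; apply Rdiv_le_0_compat; lra).
      nra. }
    destruct HF as (Hc & Hm & H0 & Hs & Hl).
    apply is_lim_spec in Hl. destruct (Hl (mkposreal 1 ltac:(lra))) as [M HM]. simpl in HM.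
    set (y := Rmax (M+1) (1 + 2 / f 1) + 1).
    assert (hy1 : M < y) by (unfold y; pose proof (Rmax_l (M+1) (1 + 2 / f 1)); lra).
    assert (hy2 : 1 + 2 / f 1 < y) by (unfold y; pose proof (Rmax_r (M+1) (1 + 2 / f 1)); lra).
    assert (h2 : 0 < 2 / f 1) by (apply Rdiv_lt_0_compat; lra).
    specialize (HM y hy1).
    destruct (MVT_gen F 1 y f) as [c [hc Hc']].
    { intros x hx. rewrite Rmin_left in hx by lra. apply Hd; lra. }
    { intros x _. apply continuity_pt_filterlim. apply Hc. }
    rewrite Rmin_left, Rmax_right in hc by lra.
    pose proof (Hge c ltac:(lra)).
    assert (f 1 * (y - 1) > 2).
    { assert (2 = f 1 * (2 / f 1)) by (field; lra). nra. }
    apply Rabs_def2 in HM. nra.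
  - assert (Hz : forall x, 0 < x <= 1 -> f x = 0).
    { intros x hx. pose proof (HI x 1 ltac:(lra) ltac:(lra)) as H. unfold rev_hazard in H.
      rewrite <- hz in H. unfold Rdiv in H. rewrite Rmult_0_l in H.
      assert (Fxp : 0 < F x) by (apply F_pos; auto; lra).
      pose proof (Hf0 x).
      assert (f x = f x * / F x * F x) by (field; lra).
      assert (0 < / F x) by (apply Rinv_0_lt_compat; lra).
      nra. }
    destruct (MVT_gen F (1/2) 1 f) as [c [hc Hc']].
    { intros x hx. rewrite Rmin_left in hx by lra. apply Hd; lra. }
    { intros x _. apply F_cpt; auto. }
    rewrite Rmin_left, Rmax_right in hc by lra.
    rewrite (Hz c) in Hc' by lra.
    destruct HF as (_ & _ & _ & Hs & _). pose proof (Hs (1/2) 1 ltac:(lra) ltac:(lra)). lra.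
Qed.

Lemma derF F f s l z : is_density F f -> 0 < l -> s < z ->
  is_derive (fun t => F ((t - s) / l)) z (/ l * f ((z - s) / l)).
Proof.
  intros [_ Hd] hl hz.
  apply (is_derive_comp F (fun t => (t - s) / l)).
  - apply Hd. apply Rdiv_lt_0_compat; lra.
  - auto_derive; auto. field. lra.
Qed.

Lemma psi_mono F f s1 s2 l1 l2 x y :
  cont_nonneg_cdf_full_support F -> is_density F f -> DPRFR F f ->
  0 < l2 -> l2 <= l1 -> s2 <= s1 -> s1 < x -> x <= y ->
  F ((x - s1) / l1) / F ((x - s2) / l2) <= F ((y - s1) / l1) / F ((y - s2) / l2).
Proof.
  intros HF Hden HD hl2 hl hs hx hxy.
  set (g1 := fun t => F ((t - s1) / l1)).
  set (g2 := fun t => F ((t - s2) / l2)).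
  set (dg := fun t => (/ l1 * f ((t - s1) / l1) * g2 t - g1 t * (/ l2 * f ((t - s2) / l2))) / (g2 t) ^ 2).
  assert (Hpos : forall t, s1 < t -> 0 < g2 t /\ 0 < g1 t).
  { intros t ht. unfold g1, g2. split; apply F_pos; auto; apply Rdiv_lt_0_compat; lra. }
  assert (Hder : forall t, s1 < t -> is_derive (fun t => g1 t / g2 t) t (dg t)).
  { intros t ht. unfold dg. apply is_derive_div.
    - apply derF; auto; lra.
    - apply derF; auto; lra.
    - destruct (Hpos t ht); lra. }
  assert (Hdg : forall t, s1 < t -> 0 <= dg t).
  { intros t ht. destruct (Hpos t ht) as [p2 p1]. unfold dg.
    apply Rdiv_le_0_compat; [| apply pow_lt; lra].
    set (u1 := (t - s1) / l1). set (u2 := (t - s2) / l2).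
    assert (hu1 : 0 < u1) by (apply Rdiv_lt_0_compat; lra).
    assert (hu12 : u1 <= u2).
    { unfold u1, u2. apply Rle_trans with ((t - s2) / l1).
      - unfold Rdiv. apply Rmult_le_compat_r; [left; apply Rinv_0_lt_compat; lra | lra].
      - unfold Rdiv. apply Rmult_le_compat_l; [lra|]. apply Rinv_le_contravar; lra. }
    pose proof (HD u1 u2 hu1 hu12) as H. unfold rev_hazard in H.
    fold (g1 t) (g2 t) in *. change (F u1) with (g1 t) in H. change (F u2) with (g2 t) in H.
    destruct Hden as [Hf0 _]. pose proof (Hf0 u1). pose proof (Hf0 u2).
    assert (E1 : u1 * l1 = t - s1) by (unfold u1; field; lra).
    assert (E2 : u2 * l2 = t - s2) by (unfold u2; field; lra).
    set (A := f u1) in *. set (B := f u2) in *.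
    set (G1 := g1 t) in *. set (G2 := g2 t) in *.
    assert (H' : u2 * B * G1 <= u1 * A * G2).
    { assert (u2 * B * G1 = u2 * (B / G2) * (G1 * G2)) by (field; lra).
      assert (u1 * A * G2 = u1 * (A / G1) * (G1 * G2)) by (field; lra).
      assert (0 < G1 * G2) by nra. nra. }
    assert (goalE : / l1 * A * G2 - G1 * (/ l2 * B) = (u1 * A * G2) / (t - s1) - (u2 * B * G1) / (t - s2)).
    { rewrite <- E1, <- E2. field. lra. }
    rewrite goalE.
    assert (0 <= u2 * B * G1) by (apply Rmult_le_pos; [apply Rmult_le_pos|]; lra).
    assert ((u2 * B * G1) / (t - s2) <= (u2 * B * G1) / (t - s1)).
    { unfold Rdiv. apply Rmult_le_compat_l; auto. apply Rinv_le_contravar; lra. }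
    assert ((u2 * B * G1) / (t - s1) <= (u1 * A * G2) / (t - s1)).
    { unfold Rdiv. apply Rmult_le_compat_r; auto. left; apply Rinv_0_lt_compat; lra. }
    lra. }
  destruct (MVT_gen (fun t => g1 t / g2 t) x y dg) as [c [hc Hc]].
  { intros t ht. rewrite Rmin_left in ht by lra. apply Hder; lra. }
  { intros t ht. rewrite Rmin_left in ht by lra. apply continuity_pt_filterlim.
    apply (ex_derive_continuous (fun t => g1 t / g2 t)). eexists. apply Hder. lra. }
  rewrite Rmin_left, Rmax_right in hc by lra.
  pose proof (Hdg c ltac:(lra)). change (g1 y / g2 y - g1 x / g2 x = dg c * (y - x)) in Hc.
  change (g1 x / g2 x <= g1 y / g2 y). nra.
Qed.

Lemma ind_cases x s : (s < x /\ ind_gt x s = 1) \/ (x <= s /\ ind_gt x s = 0).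
Proof. unfold ind_gt. destruct (Rlt_dec s x); [left|right]; split; auto; lra. Qed.

Lemma G_nonneg F s l z : cont_nonneg_cdf_full_support F -> 0 <= F ((z - s) / l) * ind_gt z s.
Proof. intros HF. destruct (ind_cases z s) as [[_ ->]|[_ ->]]; pose proof (F_nonneg F HF ((z-s)/l)); lra. Qed.

Lemma G_mono F s l x y : cont_nonneg_cdf_full_support F -> 0 < l -> x <= y ->
  F ((x - s) / l) * ind_gt x s <= F ((y - s) / l) * ind_gt y s.
Proof.
  intros HF hl hxy. destruct (ind_cases x s) as [[h ->]|[h ->]].
  - destruct (ind_cases y s) as [[h' ->]|[h' _]]; [|lra].
    rewrite !Rmult_1_r. apply HF. unfold Rdiv. apply Rmult_le_compat_r; [left; apply Rinv_0_lt_compat|]; lra.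
  - rewrite Rmult_0_r. apply G_nonneg; auto.
Qed.

Lemma key F f s1 s2 l1 l2 x y :
  cont_nonneg_cdf_full_support F -> is_density F f -> DPRFR F f ->
  0 < l2 -> l2 <= l1 -> s2 <= s1 -> x <= y ->
  (F ((x - s1) / l1) * ind_gt x s1) * (F ((y - s2) / l2) * ind_gt y s2)
  <= (F ((y - s1) / l1) * ind_gt y s1) * (F ((x - s2) / l2) * ind_gt x s2).
Proof.
  intros HF Hd HD hl2 hl hs hxy.
  destruct (ind_cases x s1) as [[h ->]|[h ->]].
  - destruct (ind_cases y s1) as [[_ ->]|[h' _]]; [|lra].
    destruct (ind_cases y s2) as [[_ ->]|[h' _]]; [|lra].
    destruct (ind_cases x s2) as [[_ ->]|[h' _]]; [|lra].
    rewrite !Rmult_1_r.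
    pose proof (psi_mono F f s1 s2 l1 l2 x y HF Hd HD hl2 hl hs h hxy) as P.
    assert (p1 : 0 < F ((x - s2) / l2)) by (apply F_pos; auto; apply Rdiv_lt_0_compat; lra).
    assert (p2 : 0 < F ((y - s2) / l2)) by (apply F_pos; auto; apply Rdiv_lt_0_compat; lra).
    set (a := F ((x - s1) / l1)) in *. set (b := F ((x - s2) / l2)) in *.
    set (c := F ((y - s1) / l1)) in *. set (d := F ((y - s2) / l2)) in *.
    assert (Ea : a = a / b * b) by (field; lra). assert (Ec : c = c / d * d) by (field; lra).
    set (p := a / b) in *. set (q := c / d) in *. rewrite Ea, Ec.
    assert (0 < b * d) by nra.
    replace (p * b * d) with (p * (b * d)) by ring. replace (q * d * b) with (q * (b * d)) by ring.
    apply Rmult_le_compat_r; lra.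
  - rewrite Rmult_0_r, Rmult_0_l. apply Rmult_le_pos; apply G_nonneg; auto.
Qed.

Theorem theorem4p4 (F f : R -> R) (s1 s2 l1 l2 r1 r2 : R) (n1 n2 m1 m2 : nat) :
  cont_nonneg_cdf_full_support F ->
  is_density F f ->
  0 <= s1 -> 0 <= s2 -> 0 < l1 -> 0 < l2 -> 0 <= r1 -> 0 <= r2 ->
  (0 < n1)%nat -> (0 < n2)%nat -> (0 < m1)%nat -> (0 < m2)%nat ->
  INR n1 * r1 + INR n2 * r2 = 1 ->
  INR m1 * r1 + INR m2 * r2 = 1 ->
  ((DPRFR F f /\ D2plus l1 l2 /\ D2plus s1 s2) \/
   (IRFR F f /\ E2plus l1 l2 /\ E2plus s1 s2)) ->
  (m1 * n2 <= n1 * m2)%nat ->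
  rh_ge (mix_cdf F (INR n1 * r1) (INR n2 * r2) s1 s2 l1 l2)
        (mix_cdf F (INR m1 * r1) (INR m2 * r2) s1 s2 l1 l2).
Proof.
  intros HF Hd hs1 hs2 hl1 hl2 hr1 hr2 _ _ _ _ _ _ Hcase Hnm.
  destruct Hcase as [[HD [[hl hl'] [hs hs']]] | [HI _]]; [| exfalso; eapply irfr_false; eauto].
  unfold rh_ge, mix_cdf. intros x y hx hxy hpos.
  pose proof (key F f s1 s2 l1 l2 x y HF Hd HD hl2 ltac:(lra) ltac:(lra) hxy) as K.
  pose proof (G_mono F s1 l1 x y HF hl1 hxy) as M1.
  pose proof (G_mono F s2 l2 x y HF hl2 hxy) as M2.
  pose proof (G_nonneg F s1 l1 x HF). pose proof (G_nonneg F s2 l2 x HF).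
  apply le_INR in Hnm. rewrite !mult_INR in Hnm.
  pose proof (pos_INR m1). pose proof (pos_INR m2). pose proof (pos_INR n1). pose proof (pos_INR n2).
  set (G1x := F ((x - s1) / l1) * ind_gt x s1) in *.
  set (G2x := F ((x - s2) / l2) * ind_gt x s2) in *.
  set (G1y := F ((y - s1) / l1) * ind_gt y s1) in *.
  set (G2y := F ((y - s2) / l2) * ind_gt y s2) in *.
  replace (INR n1 * r1 * F ((x - s1) / l1) * ind_gt x s1) with (INR n1 * r1 * G1x) by (unfold G1x; ring).
  replace (INR n2 * r2 * F ((x - s2) / l2) * ind_gt x s2) with (INR n2 * r2 * G2x) by (unfold G2x; ring).
  replace (INR m1 * r1 * F ((x - s1) / l1) * ind_gt x s1) with (INR m1 * r1 * G1x) in * by (unfold G1x; ring).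
  replace (INR m2 * r2 * F ((x - s2) / l2) * ind_gt x s2) with (INR m2 * r2 * G2x) in * by (unfold G2x; ring).
  replace (INR n1 * r1 * F ((y - s1) / l1) * ind_gt y s1) with (INR n1 * r1 * G1y) by (unfold G1y; ring).
  replace (INR n2 * r2 * F ((y - s2) / l2) * ind_gt y s2) with (INR n2 * r2 * G2y) by (unfold G2y; ring).
  replace (INR m1 * r1 * F ((y - s1) / l1) * ind_gt y s1) with (INR m1 * r1 * G1y) by (unfold G1y; ring).
  replace (INR m2 * r2 * F ((y - s2) / l2) * ind_gt y s2) with (INR m2 * r2 * G2y) by (unfold G2y; ring).
  set (bx := INR m1 * r1 * G1x + INR m2 * r2 * G2x) in *.
  set (by_ := INR m1 * r1 * G1y + INR m2 * r2 * G2y).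
  set (ax := INR n1 * r1 * G1x + INR n2 * r2 * G2x).
  set (ay := INR n1 * r1 * G1y + INR n2 * r2 * G2y).
  assert (hby : bx <= by_).
  { unfold bx, by_. apply Rplus_le_compat; apply Rmult_le_compat_l; auto; apply Rmult_le_pos; auto. }
  assert (Id : ax * by_ - ay * bx = r1 * r2 * (INR n1 * INR m2 - INR m1 * INR n2) * (G1x * G2y - G1y * G2x)).
  { unfold ax, by_, ay, bx. ring. }
  assert (0 <= r1 * r2 * (INR n1 * INR m2 - INR m1 * INR n2)).
  { apply Rmult_le_pos; [apply Rmult_le_pos|]; lra. }
  assert (ax * by_ <= ay * bx) by nra.
  assert (Ea : ax = ax / bx * bx) by (field; lra).
  assert (Eb : ay = ay / by_ * by_) by (field; lra).
  set (p := ax / bx) in *. set (q := ay / by_) in *.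
  assert (0 < bx * by_) by nra.
  apply Rmult_le_reg_r with (bx * by_); auto.
  replace (p * (bx * by_)) with (ax * by_) by (rewrite Ea; ring).
  replace (q * (bx * by_)) with (ay * bx) by (rewrite Eb; ring). auto.
Qed.
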